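(* Let $\epsilon\in(0,1]$ and $\mathcal{A}(\epsilon)=\{0,\epsilon,2\epsilon,\dots,\lfloor 1/\epsilon\rfloor\epsilon,1\}$. Let $f(p)=R(p,\alpha p,\hat{\mathcal{M}}^\ast(p,\alpha p))$ for $p\in[0,1]$, and assume $f$ is $\beta$-Lipschitz on $[0,1]$. Let $p_{\mathrm{DS}}^\ast$ be a maximizer of $f$ over $\mathcal{A}(\epsilon)$ and $q_{\mathrm{DS}}^\ast=\alpha p_{\mathrm{DS}}^\ast$. Let $(p^\ast,q^\ast,\mathcal{M}^\ast)$ be an optimal solution of Problem 1 (assumed to exist). Then $$R(p_{\mathrm{DS}}^\ast,q_{\mathrm{DS}}^\ast,\hat{\mathcal{M}}^\ast(p_{\mathrm{DS}}^\ast,q_{\mathrm{DS}}^\ast))\ \ge\ \Big(1-\frac1e\Big)R(p^\ast,q^\ast,\mathcal{M}^\ast)-\beta\epsilon.$$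
   Context: Let $\mathcal{G}=(\mathcal{U},\mathcal{E})$ be a finite directed graph without self-loops, $\mathcal{U}=\{1,\dots,U\}$. For $u,v\in\mathcal{U}$, $D(u,v;\mathcal{G})$ denotes the number of edges of a shortest directed path from $u$ to $v$ in $\mathcal{G}$, with $D(u,v;\mathcal{G})=+\infty$ if there is no such path. For an integer $d\ge0$, the $d$-visible set of $u$ is $\mathcal{V}(u,d;\mathcal{G})=\{v\in\mathcal{U}: D(v,u;\mathcal{G})\le d\}$. Fix an integer social visibility threshold $\tau\ge1$. Let $\mathcal{R}\subseteq\mathcal{U}$ (requesters) and $\mathcal{S}\subseteq\mathcal{U}$ (suppliers) be disjoint. Each requester $u\in\mathcal{R}$ has a valuation $p_u\in[0,1]$ and each supplier $u\in\mathcal{S}$ has a valuation $q_u\in[0,1]$. Let $b$ be a positive integer (budget) and $\alpha\in(0,1)$. For $p\in[0,1]$ let $\widetilde{R}(p)=\{u\in\mathcal{R}: p_u\ge p\}$ and for $q\in[0,1]$ let $\widetilde{S}(q)=\{u\in\mathcal{S}: q_u\le q\}$. For $\mathcal{M}\subseteq\mathcal{S}$ let $\widetilde{G}(p,\mathcal{M})$ be the graph obtained from $\mathcal{G}$ by adding a directed edge from every $s\in\mathcal{M}$ to every $r\in\widetilde{R}(p)$. For $u\in\widetilde{R}(p)$ let $I_u(p,\mathcal{M})=|\mathcal{V}(u,\tau;\widetilde{G}(p,\mathcal{M}))\setminus\mathcal{V}(u,\tau;\mathcal{G})|$, and $I(p,\mathcal{M})=\sum_{u\in\widetilde{R}(p)}I_u(p,\mathcal{M})$.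 The revenue is $R(p,q,\mathcal{M})=p\,I(p,\mathcal{M})-q\,I(p,\mathcal{M})$. Problem 1: maximize $R(p,q,\mathcal{M})$ over $p,q\in[0,1]$ and $\mathcal{M}$ subject to $q=\alpha p$, $\mathcal{M}\subseteq\widetilde{S}(q)$, $|\mathcal{M}|\le b$. The greedy procedure \texttt{OptSupplierSet}$(p,q)$: start with $\mathcal{M}=\emptyset$; for $t=1,\dots,b$, pick $u^\ast\in\widetilde{S}(q)$ maximizing $R(p,q,\mathcal{M}\cup\{u\})-R(p,q,\mathcal{M})$ (ties broken arbitrarily) and set $\mathcal{M}\leftarrow\mathcal{M}\cup\{u^\ast\}$; output $\hat{\mathcal{M}}^\ast(p,q)=\mathcal{M}$. *)

(* Defs.v *)
From HB Require Import structures.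
From mathcomp Require Import all_boot all_order all_algebra.
From mathcomp Require Import reals.
From mathcomp.analysis Require Import sequences exp.
Set Implicit Arguments. Unset Strict Implicit. Unset Printing Implicit Defensive.
Import Order.TTheory GRing.Theory Num.Theory.
Local Open Scope ring_scope.

Section Model.
Variables (R : realType) (T : finType).

(* d-visible set of u in the directed graph with edge relation g:
   all v such that there is a directed walk v -> ... -> u with at most d
   edges, i.e. D(v,u;g) <= d. *)
Definition visible (g : rel T) (d : nat) (u : T) : {set T} :=
  [set v | [exists k : 'I_d.+1, exists s : k.-tuple T,
              path g v s && (last v s == u)]].

Variables (e : rel T) (tau : nat) (Rq Sp : {set T}) (pv qv : T -> R).

Definition Rtil (p : R) : {set T} := [set u in Rq | p <= pv u].
Definition Stil (q : R) : {set T} := [set u in Sp | qv u <= q].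

Definition aug (p : R) (M : {set T}) : rel T :=
  fun x y => e x y || ((x \in M) && (y \in Rtil p)).

Definition Iu (p : R) (M : {set T}) (u : T) : nat :=
  #|visible (aug p M) tau u :\: visible e tau u|.

Definition Itot (p : R) (M : {set T}) : nat := (\sum_(u in Rtil p) Iu p M u)%N.

Definition Rev (p q : R) (M : {set T}) : R :=
  p * (Itot p M)%:R - q * (Itot p M)%:R.

(* If \tilde S(q) is empty no
   element can be picked and the set is left unchanged. *)
Definition greedy_step (p q : R) (M M' : {set T}) : Prop :=
  (exists2 u, u \in Stil q &
     M' = u |: M /\
     (forall v, v \in Stil q ->
        Rev p q (v |: M) - Rev p q M <= Rev p q (u |: M) - Rev p q M))
  \/ (Stil q = set0 /\ M' = M).

(* M is a possible output of t rounds of OptSupplierSet(p,q) (for some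
   tie-breaking). *)
Fixpoint greedy_out (p q : R) (t : nat) (M : {set T}) : Prop :=
  match t with
  | 0%N => M = set0
  | t'.+1 => exists M0, greedy_out p q t' M0 /\ greedy_step p q M0 M
  end.

Definition feasible (alpha : R) (b : nat) (p q : R) (M : {set T}) : Prop :=
  [/\ 0 <= p <= 1, 0 <= q <= 1, q = alpha * p, M \subset Stil q & (#|M| <= b)%N].

Definition optimal (alpha : R) (b : nat) (p q : R) (M : {set T}) : Prop :=
  feasible alpha b p q M /\
  forall p' q' M', feasible alpha b p' q' M' -> Rev p' q' M' <= Rev p q M.

End Model.

Definition grid (R : realType) (eps p : R) : Prop :=
  (exists k : nat, (k <= `|Num.floor (eps^-1)|)%N /\ p = k%:R * eps) \/ p = 1.

(* Main.v *)
Require Import Defs.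
From HB Require Import structures.
From mathcomp Require Import all_boot all_order all_algebra.
From mathcomp Require Import reals zify ring lra.
From mathcomp.analysis Require Import sequences exp.
Import Order.TTheory GRing.Theory Num.Theory.
Local Open Scope ring_scope.
Set Implicit Arguments. Unset Strict Implicit. Unset Printing Implicit Defensive.

Lemma visibleP (T : finType) (g : rel T) d u v :
  reflect (exists s : seq T, [/\ (size s <= d)%N, path g v s & last v s = u])
          (v \in visible g d u).
Proof.
rewrite inE; apply: (iffP existsP).
- case=> k /existsP [s /andP [ps /eqP ls]]; exists (tval s); split=> //.
  by rewrite size_tuple -ltnS ltn_ord.
- case=> s [sz ps ls]; exists (Ordinal (n:=d.+1) (m:=size s) sz).
  apply/existsP; exists (in_tuple s); by rewrite ps ls eqxx.
Qed.

Lemma visible_sub (T : finType) (g g' : rel T) d u v :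
  (forall x y, g x y -> g' x y) -> v \in visible g d u -> v \in visible g' d u.
Proof.
move=> gg /visibleP [s [sz ps ls]]; apply/visibleP; exists s; split=> //.
exact: sub_path ps.
Qed.

Lemma card_bigcup_le (I T : finType) (S : {set I}) (F : I -> {set T}) :
  (#|\bigcup_(i in S) F i| <= \sum_(i in S) #|F i|)%N.
Proof.
elim/big_ind2: _ => [|A1 n1 A2 n2 h1 h2|i _]; first by rewrite cards0.
- by apply: leq_trans (leq_card_setU _ _) _; apply: leq_add.
- done.
Qed.

Section Aug.
Variables (R : realType) (T : finType) (e : rel T) (Rq : {set T}) (pv : T -> R) (p : R).

Lemma aug_mono (M M' : {set T}) x y : M \subset M' -> aug e Rq pv p M x y -> aug e Rq pv p M' x y.
Proof.
move=> sub; rewrite /aug => /orP [->//|/andP [xM yR]].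
by rewrite (subsetP sub _ xM) yR orbT.
Qed.

Lemma e_aug (M : {set T}) x y : e x y -> aug e Rq pv p M x y.
Proof. by rewrite /aug => ->. Qed.

Lemma aug_decomp (M : {set T}) v s : path (aug e Rq pv p M) v s ->
  path e v s \/ exists s0 r a bq, [/\ s0 \in M, r \in Rtil Rq pv p, path e v a &
     last v a = s0] /\ [/\ path e r bq, last r bq = last v s & (size a + (size bq).+1 <= size s)%N].
Proof.
elim: s v => [|x s IH] v /=; first by left.
case/andP=> hvx /IH [ps|[s0 [r [a [bq [[s0M rR pa la] [pb lb sz]]]]]]].
- move: hvx; rewrite /aug => /orP [evx|/andP [vM xR]]; first by left; rewrite evx ps.
  right; exists v, x, [::], s; do 2 split=> //.
- move: hvx; rewrite /aug => /orP [evx|/andP [vM xR]].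
  + right; exists s0, r, (x :: a), bq; split; split=> //=.
    by rewrite evx pa.
  + right; exists v, r, [::], bq; do 2 split=> //=.
    move: sz; lia.
Qed.

Lemma visible_aug_split (M : {set T}) d u x :
  x \in visible (aug e Rq pv p M) d u ->
  x \in visible e d u \/ exists2 s0, s0 \in M & x \in visible (aug e Rq pv p [set s0]) d u.
Proof.
move=> /visibleP [s [sz ps ls]].
case: (aug_decomp ps) => [pe|[s0 [r [a [bq [[s0M rR pa la] [pb lb sz']]]]]]].
  by left; apply/visibleP; exists s.
right; exists s0 => //; apply/visibleP; exists (a ++ r :: bq); split.
  by rewrite size_cat /=; move: sz' sz; lia.
  rewrite cat_path /= la; apply/and3P; split.
  apply: (sub_path _ pa) => y z; exact: e_aug.
  by rewrite /aug inE eqxx rR orbT.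
  apply: (sub_path _ pb) => y z; exact: e_aug.
  by rewrite last_cat /= lb ls.
Qed.

End Aug.

Section Sub.
Variables (R : realType) (T : finType) (e : rel T) (tau : nat) (Rq : {set T}) (pv : T -> R) (p : R).

Definition B (M : {set T}) u := visible (aug e Rq pv p M) tau u :\: visible e tau u.

Lemma IuE (M : {set T}) u : Iu e tau Rq pv p M u = #|B M u|.
Proof. by []. Qed.

Lemma B_mono (M M' : {set T}) u : M \subset M' -> B M u \subset B M' u.
Proof.
move=> sub; apply/subsetP => x; rewrite /B !in_setD => /andP [-> /=] h.
by apply: visible_sub h => y z; apply: aug_mono.
Qed.

Lemma Iu_sub (M S : {set T}) u : ((Iu e tau Rq pv p (M :|: S) u)%:R - (Iu e tau Rq pv p M u)%:R : R)
  <= \sum_(v in S) ((Iu e tau Rq pv p (v |: M) u)%:R - (Iu e tau Rq pv p M u)%:R).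
Proof.
rewrite !IuE.
have h1 : B (M :|: S) u :\: B M u \subset \bigcup_(v in S) (B (v |: M) u :\: B M u).
  apply/subsetP => x; rewrite /B !in_setD => /andP [xnB /andP [xnV xA]].
  case: (visible_aug_split xA) => [xV|[s0 s0MS xs0]]; first by rewrite xV in xnV.
  have [s0M|s0nM] := boolP (s0 \in M).
    move: xnB; rewrite xnV /=; move/negP; case.
    by apply: visible_sub xs0 => y z; apply: aug_mono; rewrite sub1set.
  move: s0MS; rewrite in_setU (negbTE s0nM) /= => s0S.
  apply/bigcupP; exists s0 => //; rewrite in_setD /B !in_setD xnB xnV /=.
  by apply: visible_sub xs0 => y z; apply: aug_mono; rewrite sub1set setU11.
have hB v : (#|B M u| <= #|B (v |: M) u|)%N by apply/subset_leq_card/B_mono/subsetUr.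
have key : (#|B (M :|: S) u| <= #|B M u| + \sum_(v in S) (#|B (v |: M) u| - #|B M u|))%N.
  have sMS : B M u \subset B (M :|: S) u by apply/B_mono/subsetUl.
  have := cardsDS sMS; have := subset_leq_card sMS => le1 e1.
  have := subset_leq_card h1; rewrite e1 => h2.
  have h3 := leq_trans h2 (card_bigcup_le _ _).
  have h4 : (\sum_(v in S) #|B (v |: M) u :\: B M u| = \sum_(v in S) (#|B (v |: M) u| - #|B M u|))%N.
    by apply: eq_bigr => v _; rewrite cardsDS //; apply/B_mono/subsetUr.
  rewrite h4 in h3; move: h3 le1; lia.
have : ((#|B (M :|: S) u|)%:R <= (#|B M u| + \sum_(v in S) (#|B (v |: M) u| - #|B M u|))%:R :> R).
  by rewrite ler_nat.
rewrite natrD natr_sum.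
under eq_bigr => v _ do rewrite natrB //.
move=> h; rewrite lerBlDl; exact: h.
Qed.

Lemma Itot_sub (M S : {set T}) : ((Itot e tau Rq pv p (M :|: S))%:R - (Itot e tau Rq pv p M)%:R : R)
  <= \sum_(v in S) ((Itot e tau Rq pv p (v |: M))%:R - (Itot e tau Rq pv p M)%:R).
Proof.
rewrite /Itot !natr_sum -sumrB.
have E v : ((\sum_(u in Rtil Rq pv p) Iu e tau Rq pv p (v |: M) u)%:R
   - \sum_(u in Rtil Rq pv p) (Iu e tau Rq pv p M u)%:R : R)
   = \sum_(u in Rtil Rq pv p) ((Iu e tau Rq pv p (v |: M) u)%:R - (Iu e tau Rq pv p M u)%:R).
  by rewrite natr_sum sumrB.
rewrite (eq_bigr _ (fun v _ => E v)).
rewrite exchange_big /=; apply: ler_sum => u _; exact: Iu_sub.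
Qed.

Lemma Itot_mono (M M' : {set T}) : M \subset M' -> (Itot e tau Rq pv p M <= Itot e tau Rq pv p M')%N.
Proof.
move=> sub; apply: leq_sum => u _; rewrite !IuE; exact/subset_leq_card/B_mono.
Qed.

End Sub.

Section Greedy.
Variables (R : realType) (T : finType) (e : rel T) (tau : nat) (Rq Sp : {set T})
  (pv qv : T -> R).

Definition gI (p : R) (M : {set T}) : R := (Itot e tau Rq pv p M)%:R.

Lemma RevE p q M : Rev e tau Rq pv p q M = (p - q) * gI p M.
Proof. by rewrite /Rev /gI mulrBl. Qed.

Lemma gI_mono p (M M' : {set T}) : M \subset M' -> gI p M <= gI p M'.
Proof. by move=> s; rewrite /gI ler_nat; apply: Itot_mono. Qed.

Lemma gI_ge0 p M : 0 <= gI p M.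
Proof. by rewrite /gI ler0n. Qed.

Lemma greedy_bound (p a : R) (b : nat) (Mstar : {set T}) t M :
  0 < p -> a < 1 -> (0 < b)%N -> Mstar \subset Stil Sp qv (a * p) -> (#|Mstar| <= b)%N ->
  greedy_out e tau Rq Sp pv qv p (a * p) t M ->
  gI p Mstar - gI p M <= (1 - b%:R^-1) ^+ t * gI p Mstar.
Proof.
move=> p0 a1 b0 Msub Mcard.
have bR1 : 1 <= b%:R :> R by rewrite ler1n.
set y := b%:R^-1 : R.
have by1 : b%:R * y = 1 by rewrite /y mulfV // pnatr_eq0 -lt0n.
have y0 : 0 < y by rewrite /y invr_gt0 ltr0n.
have x0 : 0 <= 1 - y by nra.
have G0 := gI_ge0 p Mstar.
elim: t M => [|t IH] M /=.
  move=> ->; rewrite expr0 mul1r; have := gI_ge0 p set0; lra.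
case=> M0 [hM0 [[u uS [-> hmax]] | [hS ->]]]; last first.
  have -> : Mstar = set0 by apply/eqP; rewrite -subset0 -hS.
  have := gI_mono p (sub0set M0); have := mulr_ge0 (exprn_ge0 t.+1 x0) (gI_ge0 p set0).
  lra.
have c0 : 0 < p - a * p by nra.
have hmax' v : v \in Stil Sp qv (a * p) -> gI p (v |: M0) - gI p M0 <= gI p (u |: M0) - gI p M0.
  move=> vS; have := hmax v vS; rewrite !RevE -!mulrBr ler_pM2l //.
set d := gI p (u |: M0) - gI p M0.
have d0 : 0 <= d by rewrite /d subr_ge0; apply: gI_mono; apply: subsetUr.
have H1 : gI p Mstar <= gI p (M0 :|: Mstar) by apply: gI_mono; apply: subsetUr.
have H2 := Itot_sub e tau Rq pv p M0 Mstar.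
have H3 : \sum_(v in Mstar) (gI p (v |: M0) - gI p M0) <= #|Mstar|%:R * d.
  rewrite mulr_natl -sumr_const; apply: ler_sum => v vM.
  by apply: hmax'; apply: (subsetP Msub).
have H4 : #|Mstar|%:R * d <= b%:R * d by apply: ler_wpM2r => //; rewrite ler_nat.
have H5 : gI p Mstar - gI p M0 <= b%:R * d.
  rewrite /gI in H1 H3 *; lra.
have IH' := IH M0 hM0.
rewrite exprSr -mulrA.
set X := (1 - y) ^+ t.
have X0 : 0 <= X by apply: exprn_ge0.
set D := gI p Mstar - gI p M0.
have E1 : y * D <= d.
  have : y * D <= y * (b%:R * d) by apply: ler_wpM2l => //; apply: ltW.
  have -> : y * (b%:R * d) = d by rewrite mulrA (mulrC y b%:R) by1 mul1r.
  done.
have E2 : (1 - y) * D <= (1 - y) * (X * gI p Mstar) by apply: ler_wpM2l.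
have -> : gI p Mstar - gI p (u |: M0) = D - d by rewrite /D /d; ring.
have -> : X * ((1 - y) * gI p Mstar) = (1 - y) * (X * gI p Mstar) by ring.
have : D - d <= (1 - y) * D by rewrite mulrBl mul1r; lra.
lra.
Qed.

Lemma pow_le_exp (b : nat) : (0 < b)%N -> (1 - (b%:R : R)^-1) ^+ b <= (expR 1)^-1.
Proof.
move=> b0.
have y0 : 0 < (b%:R : R)^-1 by rewrite invr_gt0 ltr0n.
have by1 : b%:R * (b%:R : R)^-1 = 1 by rewrite mulfV // pnatr_eq0 -lt0n.
have bR1 : 1 <= b%:R :> R by rewrite ler1n.
have x0 : 0 <= 1 - (b%:R : R)^-1 by nra.
have h := expR_ge1Dx (- (b%:R : R)^-1).
rewrite -expRN -[X in expR (- X)]by1 -mulrN expRM_natl.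
apply: lerXn2r => //; rewrite ?nnegrE ?expR_ge0 //.
Qed.

End Greedy.

Theorem mainTheorem6 (R : realType) (T : finType) (e : rel T)
  (Rq Sp : {set T}) (pv qv : T -> R) (tau b : nat) (alpha eps beta : R)
  (Mhat : R -> {set T}) (pDS pstar qstar : R) (Mstar : {set T}) :
  irreflexive e ->
  [disjoint Rq & Sp] ->
  (forall u, u \in Rq -> 0 <= pv u <= 1) ->
  (forall u, u \in Sp -> 0 <= qv u <= 1) ->
  (1 <= tau)%N -> (0 < b)%N ->
  0 < alpha < 1 ->
  0 < eps <= 1 ->
  (* Mhat p = \hat M^*(p, alpha p), an output of OptSupplierSet(p, alpha p) *)
  (forall p, greedy_out e tau Rq Sp pv qv p (alpha * p) b (Mhat p)) ->
  (* f is beta-Lipschitz on [0,1] *)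
  (forall x y, 0 <= x <= 1 -> 0 <= y <= 1 ->
     `|Rev e tau Rq pv x (alpha * x) (Mhat x)
       - Rev e tau Rq pv y (alpha * y) (Mhat y)| <= beta * `|x - y|) ->
  (* pDS maximizes f over A(eps) *)
  grid eps pDS ->
  (forall p, grid eps p ->
     Rev e tau Rq pv p (alpha * p) (Mhat p)
       <= Rev e tau Rq pv pDS (alpha * pDS) (Mhat pDS)) ->
  (* (pstar, qstar, Mstar) is an optimal solution of Problem 1 *)
  optimal e tau Rq Sp pv qv alpha b pstar qstar Mstar ->
  (1 - (expR 1)^-1) * Rev e tau Rq pv pstar qstar Mstar - beta * eps
    <= Rev e tau Rq pv pDS (alpha * pDS) (Mhat pDS).
Proof.
move=> _ _ _ _ _ b0 /andP [a0 a1] /andP [eps0 eps1] hgr hlip _ hmax.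
case=> [[/andP [ps0 ps1] _ hq hsub hcard] _].
set f := fun x => Rev e tau Rq pv x (alpha * x) (Mhat x).
have beta0 : 0 <= beta.
  have h01 : (0 <= (0:R) <= 1) by apply/andP; split; lra.
  have h11 : (0 <= (1:R) <= 1) by apply/andP; split; lra.
  have := hlip 0 1 h01 h11.
  rewrite sub0r normrN normr1 mulr1 => h; rewrite mulr1 in h; exact: le_trans (normr_ge0 _) h.

have hG : (1 - (expR 1)^-1) * Rev e tau Rq pv pstar qstar Mstar <= f pstar.
  rewrite /f hq !RevE.
  have [->|pp] := eqVneq pstar 0.
    by rewrite mulr0 subrr !mul0r mulr0.
  have pg0 : 0 < pstar by rewrite lt_neqAle eq_sym pp ps0.
  have hsub' : Mstar \subset Stil Sp qv (alpha * pstar) by rewrite -hq.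
  have := greedy_bound pg0 a1 b0 hsub' hcard (hgr pstar).
  have hx := pow_le_exp R b0.
  set G := gI e tau Rq pv pstar Mstar.
  set g := gI e tau Rq pv pstar (Mhat pstar).
  set x := (1 - (b%:R : R)^-1) ^+ b.
  set E := (expR 1 : R)^-1.
  have G0 : 0 <= G by apply: gI_ge0.
  have c0 : 0 <= pstar - alpha * pstar by nra.
  have xG : x * G <= E * G by apply: ler_wpM2r.
  move=> h.
  rewrite mulrA (mulrC (1 - E)) -mulrA; apply: ler_wpM2l => //.
  rewrite mulrBl mul1r; lra.
set z := pstar / eps.
have z0 : 0 <= z by apply: divr_ge0 => //; apply: ltW.
have fl0 : 0 <= Num.floor z by rewrite floor_ge0.
set k := `|Num.floor z|%N.
have kE : (k%:R : R) = (Num.floor z)%:~R by rewrite /k natr_absz ger0_norm.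
have fi := floor_itv z.
have zle : z <= eps^-1.
  rewrite /z ler_pdivrMr // mulVf ?gt_eqF //.
have hk : (k <= `|Num.floor (eps^-1)|)%N.
  have := le_floor zle; rewrite /k; move: fl0; lia.
set pg := k%:R * eps.
have gpg : grid eps pg by left; exists k.
have zeps : z * eps = pstar by rewrite /z divfK ?gt_eqF.
move: fi; rewrite intrD => /andP [f1 f2].
have hpg1 : pg <= pstar.
  by rewrite /pg kE -zeps; apply: ler_wpM2r => //; apply: ltW.
have hpg2 : pstar - pg <= eps.
  rewrite /pg kE -zeps -mulrBl -[X in _ <= X]mul1r; apply: ler_wpM2r; first exact: ltW.
  move: f2; set F := (Num.floor z)%:~R; rewrite /= => f2.
  have e1 : (1%:~R : R) = 1 by [].
  rewrite e1 in f2; lra.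
have pg0 : 0 <= pg by rewrite /pg mulr_ge0 // ?ler0n ?ltW.
have hl := hlip pg pstar.
have : `|f pg - f pstar| <= beta * `|pg - pstar|.
  apply: hl; apply/andP; split => //; apply: le_trans hpg1 ps1.
have hd : `|pg - pstar| <= eps by rewrite distrC ger0_norm ?subr_ge0.
have := ler_wpM2l beta0 hd.
have := hmax pg gpg.
rewrite -/(f pg) -/(f pDS).
move=> h1 h2 /ler_normlP [h3 h4].
lra.
Qed.
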